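(* Let $G=(V,E,w_G)$ be any weighted undirected graph, let $\varepsilon\in(0,1)$, let $H=(V,E_H,w_H)$ be a $(1\pm\varepsilon)$-cut sparsifier of $G$, let $\beta\in(0,1)$ and let $\mathcal T$ be any $\beta$-balanced HC-tree on the vertex set $V$. Then $$(1-\varepsilon)\cdot\beta\cdot C_G(\mathcal T)\;\le\; C_H(\mathcal T)\;\le\;(1+\varepsilon)\cdot\frac{1}{\beta}\cdot C_G(\mathcal T).$$
   Context: Let $G=(V,E,w)$ be an undirected graph with nonnegative edge weights $w$. A hierarchical clustering tree (HC-tree) of $G$ is a rooted tree $\mathcal T$ whose leaves are in bijection with $V$. For a node $z$, $\mathcal T[z]$ is the subtree rooted at $z$ and $\mathrm{leaves}(\mathcal T[z])\subseteq V$ its set of leaves. For $u,v\in V$, $u\vee v$ denotes their lowest common ancestor in $\mathcal T$. The cost of $\mathcal T$ on $G$ is $C_G(\mathcal T)=\sum_{(u,v)\in E} w(u,v)\,|\mathrm{leaves}(\mathcal T[u\vee v])|$. For disjoint $A,B\subseteq V$, $w(A,B)$ denotes the total weight of edges with one endpoint in $A$ and the other in $B$, and $\bar A=V\setminus A$. If $\mathcal T$ is binary and $z$ is an internal node with children $z_1,z_2$, where $|\mathrm{leaves}(\mathcal T[z_1])|\le|\mathrm{leaves}(\mathcal T[z_2])|$, then $\mathrm{cut}(\mathcal T[z]):=(A,B)$ with $A=\mathrm{leaves}(\mathcal T[z_1])$, $B=\mathrm{leaves}(\mathcal T[z_2])$. For $0<\beta<1$, a pair of disjoint sets $(A,B)$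 is $\beta$-balanced if $\max\{|A|,|B|\}\le(1-\beta)|A\cup B|$; a binary HC-tree is $\beta$-balanced if $\mathrm{cut}(\mathcal T[z])$ is $\beta$-balanced for every internal node $z$. A weighted graph $H=(V,E_H,w_H)$ with $E_H\subseteq E$ is a $(1\pm\varepsilon)$-cut sparsifier of $G=(V,E,w_G)$ if for every nonempty $A\subsetneq V$: $(1-\varepsilon)w_G(A,\bar A)\le w_H(A,\bar A)\le(1+\varepsilon)w_G(A,\bar A)$. *)

(* Defs.v *)
From mathcomp Require Import all_boot all_order all_algebra.
Set Implicit Arguments. Unset Strict Implicit. Unset Printing Implicit Defensive.
Import Order.TTheory GRing.Theory Num.Theory.
Local Open Scope ring_scope.

Section HC.
Variable V : finType.
Variable R : realFieldType.

(* A weighted undirected graph on V: a symmetric nonnegative weight function;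
   w u v (u <> v) is the weight of edge {u,v}, 0 meaning "no edge".
   Self-loop values w u u are ignored (simple graphs). *)
Definition weighted_graph (w : V -> V -> R) : Prop :=
  (forall u v, w u v = w v u) /\ (forall u v, 0 <= w u v).

Definition edge_subset (wH wG : V -> V -> R) : Prop :=
  forall u v, u != v -> wH u v != 0 -> wG u v != 0.

Definition cut_weight (w : V -> V -> R) (A : {set V}) : R :=
  \sum_(u in A) \sum_(v in ~: A) w u v.

Definition cut_sparsifier (eps : R) (wH wG : V -> V -> R) : Prop :=
  edge_subset wH wG /\
  forall A : {set V}, A != set0 -> A != [set: V] ->
    (1 - eps) * cut_weight wG A <= cut_weight wH A /\
    cut_weight wH A <= (1 + eps) * cut_weight wG A.

Inductive bintree : Type :=
| Leaf of V
| Node of bintree & bintree.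

Fixpoint leaves (t : bintree) : seq V :=
  match t with
  | Leaf v => [:: v]
  | Node l r => leaves l ++ leaves r
  end.

Definition is_HC_tree (t : bintree) : Prop :=
  uniq (leaves t) /\ forall v : V, v \in leaves t.

Fixpoint lca_size (t : bintree) (u v : V) : nat :=
  match t with
  | Leaf _ => size (leaves t)
  | Node l r =>
      if (u \in leaves l) && (v \in leaves l) then lca_size l u v
      else if (u \in leaves r) && (v \in leaves r) then lca_size r u v
      else size (leaves t)
  end.

(* C_G(T) = sum over edges {u,v} of w(u,v) |leaves(T[u \/ v])|;
   each unordered pair is counted twice in the ordered sum, hence the 1/2. *)
Definition hc_cost (w : V -> V -> R) (t : bintree) : R :=
  2^-1 * \sum_(u : V) \sum_(v : V | u != v) w u v * (lca_size t u v)%:R.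

Fixpoint balanced (beta : R) (t : bintree) : Prop :=
  match t with
  | Leaf _ => True
  | Node l r =>
      (Num.max (size (leaves l))%:R (size (leaves r))%:R
         <= (1 - beta) * (size (leaves l) + size (leaves r))%:R)
      /\ balanced beta l /\ balanced beta r
  end.

End HC.

(* Main.v *)
Require Import Defs.
From mathcomp Require Import all_boot all_order all_algebra.
From mathcomp Require Import zify.
Set Implicit Arguments. Unset Strict Implicit. Unset Printing Implicit Defensive.
Import Order.TTheory GRing.Theory Num.Theory.
Section Comb.
Variable V : finType.

Definition sep (A : {set V}) (u v : V) : bool := (u \in A) != (v \in A).

Fixpoint cuts (t : bintree V) : seq (nat * {set V}) :=
  match t with
  | Leaf _ => [::]
  | Node l r => (size (leaves r), [set x in leaves l])
                :: (size (leaves l), [set x in leaves r]) :: cuts l ++ cuts r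
  end.

Definition Sc t u v : nat := \sum_(p <- cuts t) p.1 * sep p.2 u v.

Lemma sep_in (s : seq V) u v : sep [set x in s] u v = ((u \in s) != (v \in s)).
Proof. by rewrite /sep !inE. Qed.

Lemma Sc_node l r u v : Sc (Node l r) u v =
  size (leaves r) * ((u \in leaves l) != (v \in leaves l)) +
  size (leaves l) * ((u \in leaves r) != (v \in leaves r)) + Sc l u v + Sc r u v.
Proof. by rewrite /Sc /= !big_cons big_cat /= !sep_in !addnA. Qed.

Lemma Sc_sym t u v : Sc t u v = Sc t v u.
Proof. by rewrite /Sc; apply: eq_bigr => p _; rewrite /sep eq_sym. Qed.

Lemma Sc0 t u v : u \notin leaves t -> v \notin leaves t -> Sc t u v = 0.
Proof.
elim: t => [x|l IHl r IHr] /=; first by move=> *; rewrite /Sc big_nil.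
rewrite !mem_cat !negb_or => /andP[ul ur] /andP[vl vr].
by rewrite Sc_node IHl // IHr // (negbTE ul) (negbTE ur) (negbTE vl) (negbTE vr) /= !muln0.
Qed.

Lemma size_leaves_gt0 (t : bintree V) : 0 < size (leaves t).
Proof. by elim: t => //= l Hl r _; rewrite size_cat; lia. Qed.

Lemma Sc1 t u v : uniq (leaves t) -> u \in leaves t -> v \notin leaves t ->
  Sc t u v + 1 = size (leaves t).
Proof.
elim: t => [x|l IHl r IHr] /=.
  by rewrite /Sc big_nil.
rewrite cat_uniq => /and3P[Ul Dis Ur].
rewrite !mem_cat negb_or => uin /andP[vl vr].
rewrite Sc_node size_cat (negbTE vl) (negbTE vr).
have Hl := size_leaves_gt0 l; have Hr := size_leaves_gt0 r.
case/orP: uin => [ul|ur].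
  have ur : u \notin leaves r.
    by apply/negP => ur; move/hasP: Dis; apply; exists u.
  rewrite ul (negbTE ur) (Sc0 ur vr).
  have := IHl Ul ul vl. simpl; lia.
have ul : u \notin leaves l.
  by apply/negP => ul; move/hasP: Dis; apply; exists u.
rewrite ur (negbTE ul) (Sc0 ul vl).
have := IHr Ur ur vr. simpl; lia.
Qed.

Lemma Sc2 t u v : uniq (leaves t) -> u != v -> u \in leaves t -> v \in leaves t ->
  Sc t u v + 2 = 2 * lca_size t u v.
Proof.
elim: t => [x|l IHl r IHr] /=.
  by move=> _ uv; rewrite !inE => /eqP eu /eqP ev; rewrite eu ev eqxx in uv.
rewrite cat_uniq => /and3P[Ul Dis Ur] uv.
have nboth : forall z, z \in leaves l -> z \notin leaves r.
  by move=> z zl; apply/negP => zr; move/hasP: Dis; apply; exists z.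
have nboth' : forall z, z \in leaves r -> z \notin leaves l.
  by move=> z zr; apply/negP => zl; move: (nboth z zl); rewrite zr.
have Hl := size_leaves_gt0 l; have Hr := size_leaves_gt0 r.
rewrite !mem_cat Sc_node size_cat.
case/orP=> [ul|ur]; case/orP=> [vl|vr].
- rewrite ul vl (negbTE (nboth _ ul)) (negbTE (nboth _ vl)) /=.
  rewrite (Sc0 (nboth _ ul) (nboth _ vl)).
  have := IHl Ul uv ul vl. simpl; lia.
- rewrite ul vr (negbTE (nboth _ ul)) (negbTE (nboth' _ vr)) /=.
  have := Sc1 Ul ul (nboth' _ vr).
  have := Sc1 Ur vr (nboth _ ul). rewrite (Sc_sym r). simpl; lia.
- rewrite ur vl (negbTE (nboth' _ ur)) (negbTE (nboth _ vl)) /=.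
  have := Sc1 Ur ur (nboth _ vl).
  have := Sc1 Ul vl (nboth' _ ur). rewrite (Sc_sym l). simpl; lia.
- rewrite ur vr (negbTE (nboth' _ ur)) (negbTE (nboth' _ vr)) /=.
  rewrite (Sc0 (nboth' _ ur) (nboth' _ vr)).
  have := IHr Ur uv ur vr. simpl; lia.
Qed.

Lemma sing_sum (u v : V) : u != v -> \sum_(x : V) sep [set x] u v = 2.
Proof.
move=> uv.
rewrite (bigD1 u) //= (bigD1 v) //=; last by rewrite eq_sym.
rewrite big1 /=.
  by rewrite /sep !inE !eqxx (eq_sym v u); move: uv; case: (u == v).
move=> x /andP[xu xv]; rewrite /sep !inE.
by rewrite (eq_sym u x) (eq_sym v x) (negbTE xu) (negbTE xv).
Qed.

End Comb.
Local Open Scope ring_scope.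
Section Alg.
Variable V : finType.
Variable R : realFieldType.
Implicit Types w : V -> V -> R.

Lemma cutE w A : cut_weight w A =
  \sum_(u : V) \sum_(v : V) (if (u \in A) && (v \notin A) then w u v else 0).
Proof.
rewrite /cut_weight big_mkcond; apply: eq_bigr => u _.
case: (u \in A) => /=; last by rewrite big1.
by rewrite big_mkcond; apply: eq_bigr => v _; rewrite inE.
Qed.

Lemma pair_cut w A : (forall u v, w u v = w v u) ->
  \sum_(u : V) \sum_(v : V) w u v * (sep A u v)%:R = 2 * cut_weight w A.
Proof.
move=> sym.
have e : forall u v, w u v * (sep A u v)%:R =
  (if (u \in A) && (v \notin A) then w u v else 0) +
  (if (v \in A) && (u \notin A) then w v u else 0).
  move=> u v; rewrite /sep (sym v u).
  by case: (u \in A); case: (v \in A) => /=; rewrite ?mulr1 ?mulr0 ?addr0 ?add0r.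
rewrite (eq_bigr (fun u => \sum_(v : V) ((if (u \in A) && (v \notin A) then w u v else 0) +
  (if (v \in A) && (u \notin A) then w v u else 0)))); last first.
  by move=> u _; apply: eq_bigr => v _; rewrite e.
rewrite (eq_bigr (fun u => \sum_(v : V) (if (u \in A) && (v \notin A) then w u v else 0) +
  \sum_(v : V) (if (v \in A) && (u \notin A) then w v u else 0))); last first.
  by move=> u _; rewrite big_split.
rewrite big_split /= [X in _ + X = _]exchange_big /=.
by rewrite -cutE mulr2n mulrDl mul1r.
Qed.

End Alg.
Section Alg2.
Variable V : finType.
Variable R : realFieldType.
Implicit Types w : V -> V -> R.

Definition Q w (t : bintree V) : R :=
  \sum_(p <- cuts t) (p.1)%:R * cut_weight w p.2 + \sum_(x : V) cut_weight w [set x].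

Lemma sep_refl (A : {set V}) u : sep A u u = false.
Proof. by rewrite /sep eqxx. Qed.

Lemma hc_Q w t : (forall u v, w u v = w v u) -> is_HC_tree t ->
  hc_cost w t = 2^-1 * Q w t.
Proof.
move=> sym [Ut Int].
have key : forall u v, (if u != v then 2 * (w u v * (lca_size t u v)%:R) else 0) =
  \sum_(p <- cuts t) (p.1)%:R * (w u v * (sep p.2 u v)%:R) +
  \sum_(x : V) w u v * (sep [set x] u v)%:R.
  move=> u v; case: ifP => uv.
    rewrite mulrCA.
    have := Sc2 Ut uv (Int u) (Int v) => /(congr1 (fun n => n%:R : R)).
    rewrite natrD natrM => <-.
    rewrite mulrDr; congr (_ + _).
      rewrite /Sc natr_sum big_distrr; apply: eq_bigr => p _.
      by rewrite natrM mulrCA.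
    by rewrite -(sing_sum uv) natr_sum big_distrr.
  move/negbFE/eqP: uv => ->.
  rewrite !big1 ?addr0 // => p _; by rewrite sep_refl /= ?mulr0.
have H2 : 2 * (\sum_(u : V) \sum_(v : V | u != v) w u v * (lca_size t u v)%:R) =
          2 * Q w t.
  rewrite mulr_sumr.
  rewrite (eq_bigr (fun u => \sum_(v : V)
    (\sum_(p <- cuts t) (p.1)%:R * (w u v * (sep p.2 u v)%:R) +
     \sum_(x : V) w u v * (sep [set x] u v)%:R))); last first.
    move=> u _; rewrite mulr_sumr big_mkcond; apply: eq_bigr => v _.
    by rewrite -key.
  rewrite (eq_bigr (fun u => \sum_(p <- cuts t) \sum_(v : V)
      (p.1)%:R * (w u v * (sep p.2 u v)%:R) +
     \sum_(x : V) \sum_(v : V) w u v * (sep [set x] u v)%:R)); last first.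
    by move=> u _; rewrite big_split /= exchange_big /= [X in _ + X]exchange_big.
  rewrite big_split /= exchange_big /= [X in _ + X = _]exchange_big /=.
  rewrite /Q mulrDr mulr_sumr mulr_sumr; congr (_ + _).
    apply: eq_bigr => p _; rewrite mulrCA -pair_cut // mulr_sumr.
    by apply: eq_bigr => u _; rewrite mulr_sumr.
  by apply: eq_bigr => x _; rewrite -pair_cut.
rewrite /hc_cost.
have nz : (2 : R) != 0 by rewrite pnatr_eq0.
by rewrite (mulfI nz H2).
Qed.

End Alg2.
Section Fin.
Variable V : finType.
Variable R : realFieldType.
Implicit Types w : V -> V -> R.

Lemma cut_ge0 w (A : {set V}) : (forall u v, 0 <= w u v) -> 0 <= cut_weight w A.
Proof. by move=> nn; apply: sumr_ge0 => u _; apply: sumr_ge0. Qed.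

Lemma spars_all (eps : R) wH wG (A : {set V}) : cut_sparsifier eps wH wG ->
  (1 - eps) * cut_weight wG A <= cut_weight wH A /\
  cut_weight wH A <= (1 + eps) * cut_weight wG A.
Proof.
move=> [_ Hs].
case: (eqVneq A set0) => [->|A0].
  by rewrite /cut_weight !big_set0 !mulr0 lexx.
case: (eqVneq A setT) => [->|AT].
  have z : forall w, cut_weight w [set: V] = 0.
    by move=> w; rewrite /cut_weight setCT big1 // => u _; rewrite big_set0.
  by rewrite !z !mulr0 lexx.
exact: Hs.
Qed.

Lemma Q_ge0 w (t : bintree V) : (forall u v, 0 <= w u v) -> 0 <= Q w t.
Proof.
move=> nn; rewrite /Q addr_ge0 //; apply: sumr_ge0 => p _ //.
  by rewrite mulr_ge0 // cut_ge0.
by rewrite cut_ge0.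
Qed.

Lemma Q_bounds (eps : R) wH wG (t : bintree V) : cut_sparsifier eps wH wG ->
  (1 - eps) * Q wG t <= Q wH t /\ Q wH t <= (1 + eps) * Q wG t.
Proof.
move=> Hs; rewrite /Q !mulrDr !big_distrr /=; split; apply: lerD.
- by apply: ler_sum => p _; rewrite mulrCA ler_wpM2l // (spars_all p.2 Hs).1.
- by apply: ler_sum => x _; rewrite (spars_all [set x] Hs).1.
- by apply: ler_sum => p _; rewrite mulrCA ler_wpM2l // (spars_all p.2 Hs).2.
- by apply: ler_sum => x _; rewrite (spars_all [set x] Hs).2.
Qed.

End Fin.

Theorem theorem3p1 (V : finType) (R : realFieldType)
  (wG wH : V -> V -> R) (eps beta : R) (t : bintree V) :
  weighted_graph wG -> weighted_graph wH ->
  0 < eps < 1 ->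
  cut_sparsifier eps wH wG ->
  0 < beta < 1 ->
  is_HC_tree t -> balanced beta t ->
  (1 - eps) * beta * hc_cost wG t <= hc_cost wH t /\
  hc_cost wH t <= (1 + eps) * beta^-1 * hc_cost wG t.
Proof.
move=> [symG nnG] [symH nnH] /andP[e0 e1] Hs /andP[b0 b1] HC _.
rewrite !hc_Q //.
have [lo hi] := Q_bounds t Hs.
have qg := Q_ge0 t nnG.
have h2 : (0 : R) <= 2^-1 by rewrite invr_ge0 ler0n.
have a0 : 0 <= (1 - eps) * Q wG t by rewrite mulr_ge0 // subr_ge0 ltW.
have c0 : 0 <= (1 + eps) * Q wG t by rewrite mulr_ge0 // addr_ge0 // ltW.
split.
  rewrite mulrCA -mulrA ler_wpM2l //.
  apply: le_trans lo; rewrite mulrC -mulrA.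
  rewrite (mulrC (Q wG t)); apply: ler_piMl => //; exact: ltW.
rewrite mulrCA ler_wpM2l //.
rewrite mulrAC; apply: le_trans hi _.
by rewrite ler_peMr // invf_ge1 // ltW.
Qed.
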